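(* Let $G$ be a finite group, and let $L(G)$ be its subgroup graph. Then $L(G)$ is a regular graph if and only if $G$ is cyclic and the order of $G$ is square-free.
   Context: The subgroup graph $L(G)$ of a finite group $G$ is the (undirected, simple) graph whose vertices are all subgroups of $G$, where two vertices $H_1$ and $H_2$ are joined by an edge if and only if one of them, say $H_1$, satisfies $H_1 < H_2$ and there is no subgroup $K$ of $G$ with $H_1 < K < H_2$ (i.e. $H_1$ is a maximal subgroup of $H_2$). A graph is regular if all its vertices have the same degree. *)

(* Defs.v *)
From mathcomp Require Import all_boot all_fingroup all_solvable.
Set Implicit Arguments. Unset Strict Implicit. Unset Printing Implicit Defensive.
Local Open Scope group_scope.

(* The subgroup graph L(G): vertices are the subgroups H of G
   (H : {group gT} with H \subset G); H1 -- H2 is an edge iff one of them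
   is a maximal subgroup of the other (a proper subgroup with no subgroup
   strictly in between). *)

Definition covers (gT : finGroupType) (H1 H2 : {group gT}) : bool :=
  (H1 \proper H2) &&
  [forall K : {group gT}, ~~ ((H1 \proper K) && (K \proper H2))].

Definition subgraph_edge (gT : finGroupType) (H1 H2 : {group gT}) : bool :=
  covers H1 H2 || covers H2 H1.

Definition subgraph_vertices (gT : finGroupType) (G : {group gT})
  : {set {group gT}} := [set H : {group gT} | H \subset G].

Definition subgraph_degree (gT : finGroupType) (G H : {group gT}) : nat :=
  #|[set K : {group gT} | (K \subset G) && subgraph_edge H K]|.

Definition subgraph_regular (gT : finGroupType) (G : {group gT}) : Prop :=
  forall H K : {group gT}, H \in subgraph_vertices G -> K \in subgraph_vertices G ->
    subgraph_degree G H = subgraph_degree G K.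

Definition squarefree (n : nat) : bool :=
  [forall p : 'I_n.+1, prime p ==> ~~ (p * p %| n)%N].

(* Main.v *)
Require Import Defs.
From mathcomp Require Import all_boot all_fingroup all_solvable.
From mathcomp Require Import all_algebra.
Set Implicit Arguments. Unset Strict Implicit. Unset Printing Implicit Defensive.
Local Open Scope group_scope.
Import FiniteModule.


Section Basics.
Variable gT : finGroupType.
Implicit Types H K M D E G : {group gT}.

Lemma covers_maximal H K : covers H K = maximal H K.
Proof.
apply/idP/idP.
  case/andP=> pHK /forallP nb; apply/maxgroupP; split => // M pMK sHM.
  apply: val_inj; apply/eqP; rewrite eq_sym.
  have := nb M; rewrite pMK andbT properEneq sHM andbT.
  by move/negPn.
case/maxgroupP=> pHK maxH; rewrite /covers pHK /=.
apply/forallP=> M; apply/negP=> /andP[pHM pMK].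
have eqMH := maxH M pMK (proper_sub pHM).
by rewrite eqMH properxx in pHM.
Qed.

Lemma prime_index_covers H K : H \subset K -> prime #|K : H| -> covers H K.
Proof. by move=> sHK pr; rewrite covers_maximal; apply: p_index_maximal. Qed.

Lemma covers1 K : covers 1 K = prime #|K|.
Proof.
apply/idP/idP; last first.
  by move=> pr; apply: prime_index_covers; rewrite ?sub1G ?indexg1.
rewrite covers_maximal => /maxgroupP[p1K max1].
have ntK : K :!=: 1.
  by apply/eqP=> K1; rewrite K1 properxx in p1K.
have [q pq qK] : exists2 q, prime q & q %| #|K|.
  exists (pdiv #|K|); first by rewrite pdiv_prime // cardG_gt1.
  exact: pdiv_dvd.
have [x Kx ox] := Cauchy pq qK.
case: (eqVneq (<[x]> : {set gT}) K) => [eqxK|nexK].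
  by rewrite -eqxK -orderE ox.
have pxK : <[x]> \proper K by rewrite properEneq nexK cycle_subG Kx.
have x1 := max1 _ pxK (sub1G _).
by move: ox; rewrite orderE x1 cards1 => q1; rewrite -q1 in pq.
Qed.

Lemma not_covers_1 K : covers K 1 = false.
Proof.
apply/negbTE; rewrite /covers negb_and; apply/orP; left.
by rewrite properE sub1G andbF.
Qed.

End Basics.
Section Burnside.
Variable gT : finGroupType.
Implicit Types H K M D E G : {group gT}.

Lemma fusion_abelian p K D a x :
  p.-Sylow(K) D -> abelian D -> 'N_K(D) \subset D ->
  a \in D -> x \in K -> a ^ x \in D -> a ^ x = a.
Proof.
move=> sylD abD nDD Da Kx Dax.
set b := a ^ x.
have sDK := pHall_sub sylD.
pose C := 'C_K[b].
have sDC : D \subset C.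
  rewrite subsetI sDK /=; apply/subsetP=> d Dd; apply/cent1P.
  exact: (centsP abD).
have sDxC : D :^ x \subset C.
  rewrite subsetI -{1}(conjGid Kx) conjSg sDK /=.
  apply/subsetP=> d Dd; apply/cent1P.
  have abDx : abelian (D :^ x) by rewrite abelianJ.
  apply: (centsP abDx) => //; by rewrite /b memJ_conjg.
have sCK : C \subset K by apply: subsetIl.
have sylDC : p.-Sylow(C) D := pHall_subl sDC sCK sylD.
have sylDxC : p.-Sylow(C) (D :^ x)%G.
  apply: pHall_subl sDxC sCK _; by rewrite pHallJ.
have [c Cc defDx] := Sylow_trans sylDC sylDxC.
have /setIP[Kc cbc] := Cc.
have nD : x * c^-1 \in 'N_K(D).
  rewrite inE groupM ?groupV //=; apply/normP.
  rewrite conjsgM; have -> : D :^ x = D :^ c by exact: defDx.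
  by rewrite -conjsgM mulgV conjsg1.
have Dxc := subsetP nDD _ nD.
have e1 : a ^ (x * c^-1) = a.
  by rewrite /conjg -(centsP abD _ Dxc _ Da) mulKg.
have e2 : b ^ c^-1 = b.
  rewrite conjgE invgK; move/cent1P: cbc => cbc.
  by rewrite mulgA cbc mulgK.
by rewrite -/b -e2 /b -conjgM.
Qed.


Lemma burnside_complement p K D :
  p.-Sylow(K) D -> abelian D -> 'N_K(D) \subset D -> D \proper K ->
  exists M : {group gT}, [/\ M <| K, M :&: D = 1 & M != 1 :> {set gT}].
Proof.
move=> sylD abD nDD pDK.
have sDK := pHall_sub sylD.
have abA : abelian (idm D @* D) by rewrite im_idm.
pose V := transfer_morphism K abA.
have key : forall g, g \in D -> V g = (fmod abA g *+ #|K : D|)%R.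
  move=> g Dg; have Kg := subsetP sDK g Dg.
  have trX := transversalP (rcosets_cycle_partition sDK Kg).
  rewrite /= (transfer_cycle_expansion sDK abA Kg trX).
  rewrite -(sum_index_rcosets_cycle sDK Kg trX) -GRing.sumrMnr.
  apply: eq_bigr => x Xx /=.
  have Kx : x \in K := subsetP (transversal_sub trX) x Xx.
  set n := #|<[g]> : D :* x|.
  have Dgn : g ^+ n \in D by rewrite groupX.
  have Dc : (g ^+ n) ^ x^-1 \in D.
    by have := mulg_exp_card_rcosets D g x; rewrite mem_rcoset conjgE invgK mulgA.
  rewrite (fusion_abelian sylD abD nDD Dgn (groupVr Kx) Dc) /=.
  change (fmod abA (g ^+ n) = (fmod abA g *+ n)%R).
  have Ag : g \in idm D @* D by rewrite im_idm.
  exact: fmodX Ag.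
exists ('ker V)%G; split.
- exact: ker_normal.
- apply/trivgP/subsetP => g /setIP[kg Dg]; rewrite inE.
  have := mker kg; rewrite key // => h0.
  have gn1 : g ^+ #|K : D| = 1.
    have Ag : g \in idm D @* D by rewrite im_idm.
    rewrite -(fmodK abA (groupX _ Ag)) fmodX // h0; done.
  case/and3P: sylD => _ pD p'i.
  have cop : coprime #[g] #|K : D|.
    exact: coprime_dvdl (order_dvdG Dg) (pnat_coprime pD p'i).
  have : #[g] %| 1.
    by rewrite -(eqP cop) dvdn_gcd dvdnn order_dvdn gn1 eqxx.
  by rewrite dvdn1 order_eq1.
apply/eqP=> M1.
have injV : 'injm V by rewrite /= M1.
have abK : abelian K.
  rewrite -(injm_abelian injV (subxx K)).
  apply/centsP => u _ v _; rewrite /commute.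
  exact: GRing.addrC.
have nDK : K \subset 'N_K(D) by rewrite subsetI subxx sub_abelian_norm.
by move: pDK; rewrite properE (subset_trans nDK nDD) andbF.
Qed.

End Burnside.



Lemma not_pgroup_prime (gT : finGroupType) (K : {group gT}) (p : nat) :
  ~~ p.-group K -> exists2 q, prime q & (q %| #|K|) && (q != p).
Proof.
move=> npK.
case: (boolP [exists q : 'I_#|K|.+1, prime q && (q %| #|K|) && (nat_of_ord q != p)]).
  by case/existsP => q /andP[/andP[pq qK] qp]; exists q; rewrite ?qK.
move=> none; case/negP: npK; apply/pgroupP => q pq qK.
have qle : q < #|K|.+1 by rewrite ltnS dvdn_leq.
move: none; rewrite negb_exists => /forallP /(_ (Ordinal qle)) /=.
rewrite pq qK /= negbK => /eqP ->.
by rewrite inE.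
Qed.

Section CaseI.
Variable gT : finGroupType.
Implicit Types H K M L G : {group gT}.
Variables (p : nat) (y : gT).
Hypothesis pr_p : prime p.
Hypothesis pe_y : p.-elt y.
Hypothesis ky : p * p %| #[y].

Let D := <[y]>%G.
Let E := <[y ^+ p]>%G.

Lemma pdy : p %| #[y].
Proof. exact: dvdn_trans (dvdn_mulr p (dvdnn p)) ky. Qed.

Lemma cardE : #|E| = #[y] %/ p.
Proof. by rewrite /E /= -orderE orderXdiv // pdy. Qed.

Lemma cardD : #|D| = (#|E| * p)%N.
Proof. by rewrite cardE divnK ?pdy // /D /= -orderE. Qed.

Lemma sED : E \subset D.
Proof. exact: cycleX. Qed.

Lemma indexDE : #|D : E| = p.
Proof.
have := Lagrange sED; rewrite cardD => h.
by apply/eqP; rewrite -(eqn_pmul2l (cardG_gt0 E)) h.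
Qed.

Lemma covers_ED : covers E D.
Proof. by apply: prime_index_covers; rewrite ?sED ?indexDE. Qed.

Lemma pD : p.-group D.
Proof. by rewrite /pgroup /D /= -orderE. Qed.

Lemma proper_sub_E H : H \proper D -> H \subset E.
Proof.
move=> pHD; have sHD := proper_sub pHD.
rewrite -(cardSg_cyclic (cycle_cyclic y) sHD sED).
have iHD : #|D : H| != 1%N by rewrite indexg_eq1; move: pHD; rewrite properE => /andP[].
have pi : p.-nat #|D : H| := pnat_dvd (dvdn_indexg D H) pD.
have [j ej] := p_natP pi.
have pdi : p %| #|D : H|.
  by move: iHD; rewrite ej; case: j {ej} => [|j] //= _; rewrite expnS dvdn_mulr.
have := Lagrange sHD; rewrite cardD => h.
rewrite -(dvdn_pmul2r (prime_gt0 pr_p)) -h.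
by rewrite dvdn_pmul2l ?cardG_gt0.
Qed.

Lemma ynotE : y \notin E.
Proof.
apply/negP=> yE; have : D \subset E by rewrite /D /= cycle_subG.
move/subset_leq_card; rewrite cardD -{2}(muln1 #|E|) leq_pmul2l ?cardG_gt0 //.
by rewrite leqNgt (prime_gt1 pr_p).
Qed.

Lemma lower_D H : covers H D -> H = E.
Proof.
rewrite covers_maximal => /maxgroupP[pHD maxH].
have pED : E \proper D.
  by rewrite properEneq sED andbT; apply/eqP=> ED; move: ynotE; rewrite ED /D /= cycle_id.
have hh := maxH E pED (proper_sub_E pHD).
by apply: val_inj; rewrite /= -hh.
Qed.


Lemma yD : y \in D.
Proof. exact: cycle_id. Qed.

Lemma pED : E \proper D.
Proof.
by rewrite properEneq sED andbT; apply/eqP=> ED; move: ynotE; rewrite ED /D /= cycle_id.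
Qed.

Lemma normE g : g \in 'N(D) -> g \in 'N(E).
Proof.
move=> nDg; apply/normP.
have sEgD : (E :^ g)%G \subset D.
  by rewrite /= -(normP nDg) conjSg sED.
have := eq_subG_cyclic (cycle_cyclic y) sEgD sED.
by rewrite /= cardJg eqxx => /eqP.
Qed.

Variable G : {group gT}.
Hypothesis yG : y \in G.
Hypothesis maxy : forall z, z \in G -> p.-elt z -> #[z] <= #[y].

Lemma lemmaU K M : D \subset K -> M \subset K -> M :&: D = 1 -> M != 1 :> {set gT} ->
   (M \subset 'N(E)) \/ (E \subset 'N(M)) ->
   exists H : {group gT}, [/\ E \proper H, H \subset K & ~~ (D \subset H)].
Proof.
move=> sDK sMK tiMD ntM nEM.
have eJ : E <*> M = E * M by case: nEM => h; [rewrite norm_joinEr | rewrite norm_joinEl].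
exists (E <*> M)%G; split.
- rewrite properEneq joing_subl andbT; apply/eqP=> eEM.
  have sME : M \subset E by rewrite eEM joing_subr.
  have sMD : M \subset D := subset_trans sME sED.
  by move: ntM; rewrite -tiMD (setIidPl sMD) eqxx.
- by rewrite join_subG (subset_trans sED sDK) sMK.
apply/negP=> sDH.
have : y \in E * M by rewrite -eJ (subsetP sDH) // yD.
case/mulsgP => e m Ee Mm yem.
have Dm : m \in D.
  have -> : m = e^-1 * y by rewrite yem mulKg.
  by apply: groupM; [rewrite groupV; exact: (subsetP sED) | exact: yD].
have : m \in M :&: D by rewrite inE Mm Dm.
rewrite tiMD => /set1P m1.
by move: ynotE; rewrite yem m1 mulg1 Ee.
Qed.


Lemma lemmaX K : K \subset G -> covers D K ->
  exists H : {group gT}, [/\ E \proper H, H \subset K & ~~ (D \subset H)].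
Proof.
move=> sKG cDK; have mDK : maximal D K by rewrite -covers_maximal.
have pDK : D \proper K by case/andP: cDK.
have sDK := proper_sub pDK.
have sEK := subset_trans sED sDK.
case: (boolP (p.-group K)) => pK; last first.
  case: (boolP (K \subset 'N(D))) => nDK.
    have [q pq /andP[qK qp]] := not_pgroup_prime pK.
    have [x Kx ox] := Cauchy pq qK.
    apply: (@lemmaU K <[x]>%G sDK); rewrite ?cycle_subG //.
    - apply: coprime_TIg; rewrite /= -orderE ox prime_coprime //.
      apply/negP=> qD; have := pgroupP pD q pq qD.
      by rewrite inE (negbTE qp).
    - by apply/eqP=> x1; move: ox; rewrite orderE x1 cards1 => q1; rewrite -q1 in pq.
    - by left; apply: normE; apply: (subsetP nDK).
  have [S sylS sDS] := Sylow_superset sDK pD.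
  have eSD : S :=: D.
    apply/eqP; rewrite eq_sym eqEproper sDS /=; apply/negP => pDS.
    have [_ maxD] := maxgroupP mDK.
    case: (boolP (S \proper K)) => pSK.
      by have := maxD S pSK sDS => eSD; rewrite eSD properxx in pDS.
    have eSK : S :=: K.
      by apply/eqP; rewrite eqEproper (pHall_sub sylS) pSK.
    by move: pK; rewrite -eSK (pHall_pgroup sylS).
  have sylD : p.-Sylow(K) D by rewrite -eSD.
  have nDD : 'N_K(D) \subset D.
    have [_ maxD] := maxgroupP mDK.
    have sDN : D \subset 'N_K(D) by rewrite subsetI sDK normG.
    case: (boolP ('N_K(D) \proper K)) => pNK.
      by rewrite (maxD _ pNK sDN).
    have : K \subset 'N_K(D).
      by move: pNK; rewrite properE subsetIl /= negbK.
    by rewrite subsetI (negbTE nDK) andbF.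
  have [M [nMK tiMD ntM]] := burnside_complement sylD (cycle_abelian y) nDD pDK.
  apply: (lemmaU sDK (normal_sub nMK) tiMD ntM); right.
  exact: subset_trans sEK (normal_norm nMK).
have nDK : K \subset 'N(D) := normal_norm (p_maximal_normal pK mDK).
have iKD : #|K : D| = p := p_maximal_index pK mDK.
have [_ [x Kx nDx]] := properP pDK.
have nx : x \in 'N(D) := subsetP nDK x Kx.
have xpD : x ^+ p \in D.
  apply: coset_idr; first by rewrite groupX.
  rewrite morphX //= -iKD -card_quotient //.
  by rewrite expg_cardG // mem_quotient.
have pex : p.-elt x := mem_p_elt pK Kx.
have pdx : p %| #[x].
  have [j ej] := p_natP pex.
  case: j ej => [|j] ej.
    have x1 : x = 1 by apply/eqP; rewrite -order_eq1 ej expn0.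
    by move: nDx; rewrite x1 group1.
  by rewrite ej expnS dvdn_mulr.
have oxp : #[x ^+ p] = #[x] %/ p by rewrite orderXdiv.
have xpE : x ^+ p \in E.
  apply/negPn/negP => nxpE.
  have eD : <[x ^+ p]> = D :> {set gT}.
    apply/eqP; rewrite eqEproper cycle_subG xpD /=.
    apply/negP=> pxD; move: nxpE; rewrite -cycle_subG.
    by rewrite (proper_sub_E (H := <[x ^+ p]>%G)).
  have : #[x ^+ p] = #[y] by rewrite !orderE eD.
  rewrite oxp => exy.
  have := maxy (subsetP sKG x Kx) pex.
  rewrite -exy => h.
  have m0 : 0 < #[x] %/ p by rewrite divn_gt0 ?(prime_gt0 pr_p) // dvdn_leq.
  have : #[x] %/ p * p <= #[x] %/ p * 1 by rewrite muln1 divnK.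
  by rewrite leq_pmul2l // leqNgt (prime_gt1 pr_p).
have nEx : x \in 'N(E) := normE nx.
exists (E <*> <[x]>)%G; split.
- rewrite properEneq joing_subl andbT; apply/eqP=> eEx.
  have : x \in E by rewrite eEx /= mem_gen // inE cycle_id orbT.
  by move=> xE; move: nDx; rewrite (subsetP sED x xE).
- by rewrite join_subG sEK cycle_subG.
apply/negP=> sDH.
set H := (E <*> <[x]>)%G in sDH.
have eH : H :=: E * <[x]> by rewrite /= norm_joinEr // cycle_subG.
have sHK : H \subset K by rewrite join_subG sEK cycle_subG.
have eHK : H :=: K.
  apply/eqP; rewrite eqEproper sHK /=; apply/negP=> pHK.
  have [_ maxD] := maxgroupP mDK.
  have eHD := maxD H pHK sDH.
  have : x \in H by rewrite mem_gen // inE cycle_id orbT.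
  by rewrite eHD (negbTE nDx).
have cK : #|K| = (#|E| * p * p)%N.
  by rewrite -(Lagrange sDK) iKD cardD.
have mc : (#|E| * #[x] = #|E| * p * p * #|E :&: <[x]>|)%N.
  by have := mul_cardG E <[x]>%G; rewrite /= -eH eHK cK -(orderE x).
have le_c : #[x ^+ p] <= #|E :&: <[x]>|.
  by rewrite orderE subset_leq_card // subsetI cycle_subG xpE cycleX.
have ex : #[x] = (#[x ^+ p] * p)%N by rewrite oxp divnK.
rewrite ex in mc.
have p1 := prime_gt1 pr_p.
have a0 := cardG_gt0 E.
have b0 : 0 < #[x ^+ p] := order_gt0 _.
move: mc le_c p1 a0 b0.
move: #|E| #[x ^+ p] #|E :&: <[x]>| => a b c.
move=> mc' lbc p1' a0' b0'.
have h1 : (a * p * p * b <= a * p * p * c)%N by rewrite leq_mul2l lbc orbT.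
rewrite -mc' in h1.
have e1 : (a * p * p * b = a * b * p * p)%N by rewrite mulnAC [(a * p * b)%N]mulnAC.
have e2 : (a * (b * p) = a * b * p * 1)%N by rewrite muln1 mulnA.
rewrite e1 e2 leq_pmul2l ?muln_gt0 ?a0' ?b0' ?(ltnW p1') // in h1.
by rewrite leqNgt p1' in h1.
Qed.


Lemma getL K : K \subset G -> covers D K ->
  exists L : {group gT}, [&& covers E L, L \subset K & ~~ (L \subset D)].
Proof.
move=> sKG cDK; have [H [pEH sHK nDH]] := lemmaX sKG cDK.
pose gP := fun L : {group gT} => (E \proper L) && (L \subset H).
have gPH : gP H by rewrite /gP pEH subxx.
have [L minL sLH] := mingroup_exists gPH.
have [/andP[pEL _] minL'] := mingroupP minL.
exists L; apply/and3P; split.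
- rewrite /covers pEL /=; apply/forallP=> M; apply/negP=> /andP[pEM pML].
  have gPM : gP M by rewrite /gP pEM (subset_trans (proper_sub pML) sLH).
  have eML := minL' M gPM (proper_sub pML).
  by rewrite eML properxx in pML.
- exact: subset_trans sLH sHK.
apply/negP=> sLD.
have /andP[_ /forallP /(_ L)] := covers_ED.
rewrite pEL /= properEneq sLD andbT negbK => /eqP eLD.
have eDL : (D : {set gT}) = L by rewrite eLD.
by move: nDH; rewrite eDL sLH.
Qed.

Lemma joinK K L : covers D K -> L \subset K -> ~~ (L \subset D) -> K = (D <*> L)%G.
Proof.
move=> cDK sLK nLD.
have sDK : D \subset K by case/andP: cDK => /proper_sub.
have sJK : D <*> L \subset K by rewrite join_subG sDK sLK.
have pDJ : D \proper D <*> L.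
  rewrite properEneq joing_subl andbT; apply/eqP=> eDJ.
  by move: nLD; rewrite eDJ joing_subr.
case/andP: cDK => _ /forallP /(_ (D <*> L)%G); rewrite pDJ /= => nJK.
apply: val_inj => /=; apply/eqP; rewrite eq_sym eqEproper sJK /=.
by [].
Qed.

Lemma sDG : D \subset G.
Proof. by rewrite /D /= cycle_subG. Qed.

Lemma sEG : E \subset G.
Proof. exact: subset_trans sED sDG. Qed.

Lemma degree_lt : subgraph_degree G D < subgraph_degree G E.
Proof.
pose CovD := [set K : {group gT} | (K \subset G) && covers D K].
have h1 : subgraph_degree G D <= #|CovD|.+1.
  rewrite /subgraph_degree.
  apply: leq_trans (_ : #|E |: CovD| <= _); last first.
    by rewrite cardsU1; case: (E \in CovD).
  apply: subset_leq_card; apply/subsetP => K; rewrite !inE.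
  case/andP=> sKG; rewrite /subgraph_edge => /orP[cDK | cKD].
    by rewrite sKG cDK orbT.
  by rewrite (lower_D cKD) eqxx.
pose iota := fun K : {group gT} =>
  odflt K [pick L : {group gT} | [&& covers E L, L \subset K & ~~ (L \subset D)]].
have iotaP : forall K, K \in CovD ->
  [&& covers E (iota K), iota K \subset K & ~~ (iota K \subset D)].
  move=> K; rewrite inE => /andP[sKG cDK]; rewrite /iota.
  case: pickP => [L //|none].
  by have [L hL] := getL sKG cDK; move: (none L); rewrite hL.
have inj : {in CovD &, injective iota}.
  move=> K1 K2 C1 C2 e12.
  have /and3P[_ s1 n1] := iotaP K1 C1.
  have /and3P[_ s2 n2] := iotaP K2 C2.
  have c1 : covers D K1 by move: C1; rewrite inE => /andP[].
  have c2 : covers D K2 by move: C2; rewrite inE => /andP[].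
  by rewrite (joinK c1 s1 n1) (joinK c2 s2 n2) e12.
pose SE := [set K : {group gT} | (K \subset G) && subgraph_edge E K].
pose B := [set K : {group gT} | K \subset D].
have h2 : #|CovD| <= #|SE :\: B|.
  rewrite -(card_in_imset inj); apply: subset_leq_card.
  apply/subsetP => _ /imsetP[K CK ->].
  have /and3P[cEL sLK nLD] := iotaP K CK.
  have sKG : K \subset G by move: CK; rewrite inE => /andP[].
  by rewrite !inE nLD /= (subset_trans sLK sKG) /subgraph_edge cEL.
have ntE : [1 gT] \proper E.
  rewrite proper1G -cardG_gt1 cardE.
  have pdq : p %| #[y] %/ p by rewrite dvdn_divRL ?pdy.
  apply: leq_trans (prime_gt1 pr_p) (dvdn_leq _ pdq).
  by rewrite divn_gt0 ?(prime_gt0 pr_p) // dvdn_leq // pdy.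
have [M maxM _] := @maxgroup_exists _ (fun M : {group gT} => M \proper E) 1%G ntE.
have cME : covers M E by rewrite covers_maximal.
have pME : M \proper E by case/andP: cME.
have h3 : 2 <= #|SE :&: B|.
  have sMD : M \subset D := subset_trans (proper_sub pME) sED.
  have neMD : M != D.
    apply/eqP=> eMD; move: (proper_trans pME pED); rewrite eMD properxx //.
  apply: leq_trans (_ : #|[set M; D]| <= _); first by rewrite cards2 neMD.
  apply: subset_leq_card; apply/subsetP=> K.
  rewrite !inE => /orP[] /eqP ->; rewrite ?sMD ?subxx /subgraph_edge.
    by rewrite (subset_trans sMD sDG) cME orbT.
  by rewrite sDG covers_ED.
rewrite /subgraph_degree -/SE -(cardsID B SE).
apply: leq_trans (_ : #|CovD|.+2 <= _).
  by rewrite ltnS.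
by rewrite -addn2 addnC leq_add.
Qed.


End CaseI.



Section Gen.
Variable gT : finGroupType.
Implicit Types H K M L P Q R G : {group gT}.

Lemma joinK_gen P K L : covers P K -> L \subset K -> ~~ (L \subset P) -> K = (P <*> L)%G.
Proof.
move=> cPK sLK nLP.
have sPK : P \subset K by case/andP: cPK => /proper_sub.
have sJK : P <*> L \subset K by rewrite join_subG sPK sLK.
have pPJ : P \proper P <*> L.
  rewrite properEneq joing_subl andbT; apply/eqP=> ePJ.
  by move: nLP; rewrite ePJ joing_subr.
case/andP: cPK => _ /forallP /(_ (P <*> L)%G); rewrite pPJ /= => nJK.
by apply: val_inj => /=; apply/eqP; rewrite eq_sym eqEproper sJK.
Qed.

Lemma prime_sub_eq R P : prime #|R| -> prime #|P| -> R \subset P -> R = P.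
Proof.
move=> pR pP sRP; apply: val_inj => /=; apply/eqP; rewrite eqEcard sRP /=.
have := cardSg sRP; rewrite dvdn_prime2 // => /eqP ->; done.
Qed.

Lemma lower_prime K P : prime #|P| -> covers K P -> K = 1%G.
Proof.
move=> pP /andP[pKP _]; apply: val_inj => /=; apply/eqP; rewrite trivg_card1.
have := cardSg (proper_sub pKP); case/primeP: pP => _ h /h /orP[] // /eqP eKP.
by move: (proper_card pKP); rewrite eKP ltnn.
Qed.

End Gen.

Section CaseII.
Variable gT : finGroupType.
Implicit Types H K M L P Q R : {group gT}.
Variable G : {group gT}.
Hypothesis nop2 : forall x, x \in G -> forall q, prime q -> ~~ (q * q %| #[x]).
Hypothesis reg : subgraph_regular G.

Let A := [set Q : {group gT} | (Q \subset G) && prime #|Q|].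
Let CovP P := [set K : {group gT} | (K \subset G) && covers P K].
Let f P := fun Q : {group gT} => (P <*> Q)%G.

Lemma deg1 : subgraph_degree G 1%G = #|A|.
Proof.
rewrite /subgraph_degree; apply: eq_card => K; rewrite !inE.
by rewrite /subgraph_edge covers1 not_covers_1 orbF.
Qed.

Lemma degP P : P \in A -> subgraph_degree G P = (#|CovP P|).+1.
Proof.
rewrite inE => /andP[sPG pP].
rewrite /subgraph_degree (_ : [set K | _] = 1%G |: CovP P).
  by rewrite cardsU1 !inE not_covers_1 andbF.
apply/setP => K; rewrite !inE /subgraph_edge.
case: (eqVneq K 1%G) => [-> | nK1] /=.
  by rewrite sub1G covers1 pP orbT.
case: (boolP (covers K P)) => cKP; last by rewrite orbF.
by move: nK1; rewrite (lower_prime pP cKP) eqxx.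
Qed.

Lemma cov_gen P K : P \in A -> K \subset G -> covers P K ->
  exists2 Q, Q \in A :\ P & K = (P <*> Q)%G.
Proof.
rewrite inE => /andP[sPG pP] sKG cPK.
have [_ [z Kz nPz]] := properP (proj1 (andP cPK)).
have Gz := subsetP sKG z Kz.
set p := #|P|.
have [Q [sQK pQ nQP]] : exists Q : {group gT}, [/\ Q \subset K, prime #|Q| & ~~ (Q \subset P)].
  case: (boolP (p.-elt z)) => pz.
    have [j ej] := p_natP pz.
    exists <[z]>%G; split; [by rewrite cycle_subG | | by rewrite cycle_subG].
    rewrite /= -orderE ej; case: j ej => [|[|j]] ej.
    - have z1 : z = 1 by apply/eqP; rewrite -order_eq1 ej.
      by move: nPz; rewrite z1 group1.
    - by rewrite expn1.
    - by move: (nop2 Gz pP); rewrite ej !expnS mulnA (dvdn_mulr _ (dvdnn _)).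
  have npz : ~~ p.-group <[z]>%G by rewrite /pgroup /= -orderE.
  have [l pl /andP[lz lp]] := not_pgroup_prime npz.
  have [w zw ow] := Cauchy pl lz.
  exists <[w]>%G; split => /=.
  - by rewrite cycle_subG (subsetP _ w zw) // cycle_subG.
  - by rewrite -orderE ow.
  apply/negP=> sWP; move: (cardSg sWP); rewrite /= -orderE ow dvdn_prime2 // => /eqP lp'.
  by rewrite lp' eqxx in lp.
exists Q; last exact: joinK_gen.
rewrite !inE (subset_trans sQK sKG) pQ !andbT.
by apply/eqP=> eQP; move: nQP; rewrite eQP subxx.
Qed.

Lemma imageP P : P \in A -> CovP P = f P @: (A :\ P) /\ {in A :\ P &, injective (f P)}.
Proof.
move=> AP.
have sPG : P \subset G by move: AP; rewrite inE => /andP[].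
have d : #|CovP P|.+1 = #|A|.
  by rewrite -degP // -deg1; apply: reg; rewrite inE ?sPG ?sub1G.
have e1 : #|CovP P| = #|A :\ P|.
  by have := cardsD1 P A; rewrite AP -d add1n => -[].
have sub : CovP P \subset f P @: (A :\ P).
  apply/subsetP => K; rewrite inE => /andP[sKG cPK].
  have [Q AQ eK] := cov_gen AP sKG cPK.
  by apply/imsetP; exists Q.
have le := leq_imset_card (f P) (A :\ P).
have eqc : #|f P @: (A :\ P)| = #|A :\ P|.
  apply/eqP; rewrite eqn_leq le /= -e1; exact: subset_leq_card.
split; last by apply/imset_injP; rewrite eqc.
apply/eqP; rewrite eqEcard sub /= eqc e1 //.
Qed.


Lemma covers_join P Q : P \in A -> Q \in A -> Q != P -> covers P (P <*> Q)%G.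
Proof.
move=> AP AQ nQP; have [eC _] := imageP AP.
have : (P <*> Q)%G \in CovP P.
  by rewrite eC; apply/imsetP; exists Q; rewrite // in_setD1 nQP AQ.
by rewrite inE => /andP[].
Qed.

Lemma atoms_join P Q R : P \in A -> Q \in A -> R \in A -> Q != P -> R != P ->
  R \subset P <*> Q -> R = Q.
Proof.
move=> AP AQ AR nQP nRP sRJ.
have [eC inj] := imageP AP.
have cPJ := covers_join AP AQ nQP.
have pR : prime #|R| by move: AR; rewrite inE => /andP[].
have pP : prime #|P| by move: AP; rewrite inE => /andP[].
have nRsP : ~~ (R \subset P).
  by apply/negP=> sRP; move: nRP; rewrite (prime_sub_eq pR pP sRP) eqxx.
have eJ := joinK_gen cPJ sRJ nRsP.
have e : f P R = f P Q by rewrite /f /= -eJ.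
by apply: (inj _ _ _ _ e); rewrite in_setD1 ?nRP ?nQP ?AR ?AQ.
Qed.

Lemma unique_atom P Q : P \in A -> Q \in A -> #|P| = #|Q| -> P = Q.
Proof.
move=> AP AQ ePQ; case: (eqVneq P Q) => // nPQ.
have nQP : Q != P by rewrite eq_sym.
have pP : prime #|P| by move: AP; rewrite inE => /andP[].
have pQ : prime #|Q| by move: AQ; rewrite inE => /andP[].
have sPG : P \subset G by move: AP; rewrite inE => /andP[].
have sQG : Q \subset G by move: AQ; rewrite inE => /andP[].
set p := #|P| in pP ePQ.
set K := (P <*> Q)%G.
have cPK : covers P K := covers_join AP AQ nQP.
have sKG : K \subset G by rewrite join_subG sPG sQG.
have pK : p.-group K.
  apply/pgroupP => l pl lK.
  have [w Kw ow] := Cauchy pl lK.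
  have AW : <[w]>%G \in A.
    by rewrite inE cycle_subG (subsetP sKG) //= -orderE ow pl.
  case: (eqVneq <[w]>%G P) => [eWP | nWP].
    have : #|<[w]>%G| = #|P| by rewrite eWP.
    by rewrite /= -orderE ow => ->; rewrite inE.
  have sWK : <[w]>%G \subset P <*> Q by rewrite /= cycle_subG.
  have eWQ := atoms_join AP AQ AW nQP nWP sWK.
  have : #|<[w]>%G| = #|Q| by rewrite eWQ.
  by rewrite /= -orderE ow -ePQ => ->; rewrite inE.
have mPK : maximal P K by rewrite -covers_maximal.
have iKP := p_maximal_index pK mPK.
have sPK : P \subset K by rewrite joing_subl.
have sQK : Q \subset K by rewrite joing_subr.
have cK : #|K| = (p ^ 2)%N by rewrite -(Lagrange sPK) iKP -/p expnS expn1.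
have abK : abelian K := card_p2group_abelian pP cK.
have [u eu] := cyclicP (prime_cyclic pP).
have [v ev] := cyclicP (prime_cyclic pQ).
have Pu : u \in P by rewrite eu cycle_id.
have Qv : v \in Q by rewrite ev cycle_id.
have ou : #[u] = p by rewrite orderE -eu.
have ov : #[v] = p by rewrite orderE -ev -ePQ.
have Ku := subsetP sPK u Pu.
have Kv := subsetP sQK v Qv.
have cuv : commute u v := centsP abK u Ku v Kv.
set w := u * v.
have Kw : w \in K by rewrite groupM.
have wp : w ^+ p = 1.
  by rewrite expgMn // -{1}ou -ov !expg_order mulg1.
have vP_false : v \in P -> False.
  move=> vP; have sQP : Q \subset P by rewrite ev cycle_subG.
  by move: nQP; rewrite (prime_sub_eq pQ pP sQP) eqxx.
have uQ_false : u \in Q -> False.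
  move=> uQ; have sPQ : P \subset Q by rewrite eu cycle_subG.
  by move: nQP; rewrite (prime_sub_eq pP pQ sPQ) eqxx.
have ow : #[w] = p.
  have : #[w] %| p by rewrite order_dvdn wp.
  case/primeP: pP => _ h /h /orP[] /eqP // w1.
  move/eqP: w1; rewrite order_eq1 => /eqP w1.
  have : v = u^-1 by rewrite -(mulKg u v) -/w w1 mulg1.
  by move=> ev'; exfalso; apply: vP_false; rewrite ev' groupV.
have AW : <[w]>%G \in A.
  by rewrite inE cycle_subG (subsetP sKG) //= -orderE ow.
have nWP : <[w]>%G != P.
  apply/eqP=> eWP; apply: vP_false.
  have wP : w \in P by rewrite -eWP /= cycle_id.
  by rewrite -(mulKg u v) -/w groupM ?groupV.
have sWK : <[w]>%G \subset P <*> Q by rewrite /= cycle_subG.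
have eWQ := atoms_join AP AQ AW nQP nWP sWK.
exfalso; apply: uQ_false.
have wQ : w \in Q by rewrite -eWQ /= cycle_id.
by rewrite -(mulgK v u) -/w groupM ?groupV.
Qed.



Lemma atom_cycle x : x \in G -> prime #[x] -> <[x]>%G \in A.
Proof. by move=> Gx px; rewrite inE cycle_subG Gx /= -orderE. Qed.

Lemma pelt_order_p x q : x \in G -> prime q -> q.-elt x -> x != 1 -> #[x] = q.
Proof.
move=> Gx pq qx nx1; have [j ej] := p_natP qx.
case: j ej => [|[|j]] ej.
- by move: nx1; rewrite -order_eq1 ej eqxx.
- by rewrite ej expn1.
- by move: (nop2 Gx pq); rewrite ej !expnS mulnA (dvdn_mulr _ (dvdnn _)).
Qed.

Lemma caseII_sqf : squarefree #|G|.
Proof.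
apply/forallP => q; apply/implyP => pq; apply/negP => qqG.
have qG : q %| #|G| := dvdn_trans (dvdn_mulr q (dvdnn q)) qqG.
have [x0 Gx0 ox0] := Cauchy pq qG.
have [S sylS] := Sylow_exists q G.
have sSG := pHall_sub sylS.
have sSx0 : S \subset <[x0]>.
  apply/subsetP => s Ss.
  case: (eqVneq s 1) => [-> | ns1]; first exact: group1.
  have Gs := subsetP sSG s Ss.
  have os : #[s] = q := pelt_order_p Gs pq (mem_p_elt (pHall_pgroup sylS) Ss) ns1.
  have As : <[s]>%G \in A by apply: atom_cycle; rewrite ?os.
  have Ax0 : <[x0]>%G \in A by apply: atom_cycle; rewrite ?ox0.
  have e : <[s]>%G = <[x0]>%G by apply: unique_atom; rewrite //= -!orderE os ox0.
  have : s \in <[s]>%G by exact: cycle_id.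
  by rewrite e.
have := subset_leq_card sSx0; rewrite -orderE ox0 (card_Hall sylS) p_part.
have G0 := cardG_gt0 G.
have lg : (2 <= logn q #|G|)%N by rewrite -pfactor_dvdn // expnS expn1.
have : (q ^ 2 <= q ^ logn q #|G|)%N.
  by rewrite leq_exp2l ?(prime_gt1 pq).
move=> h1 h2; have := leq_trans h1 h2.
by rewrite expnS expn1 -[X in (_ <= X)%N](muln1 q) leq_pmul2l ?(prime_gt0 pq) // leqNgt (prime_gt1 pq).
Qed.

Lemma caseII_cyc : cyclic G.
Proof.
apply: order_inj_cyclic => x z Gx Gz oxz.
suff xz : x \in <[z]>.
  by apply/eqP; rewrite eqEcard cycle_subG xz /= -!orderE oxz leqnn.
rewrite -(prod_constt x); apply: group_prod => q _.
have sxG : <[x]> \subset G by rewrite cycle_subG.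
have szG : <[z]> \subset G by rewrite cycle_subG.
have Gxq : x.`_q \in G := subsetP sxG _ (cycle_constt q x).
have Gzq : z.`_q \in G := subsetP szG _ (cycle_constt q z).
case: (eqVneq (#[x]`_q)%N 1%N) => [h1 | hq].
  have : #[x.`_q] = 1%N by rewrite order_constt h1.
  by move/eqP; rewrite order_eq1 => /eqP ->; rewrite group1.
have gt1 : (1 < #[x]`_q)%N by rewrite ltn_neqAle eq_sym hq part_gt0.
have pq : prime q.
  by move: gt1; rewrite p_part_gt1 mem_primes => /andP[].
have nx1 : x.`_q != 1 by rewrite -order_eq1 order_constt.
have nz1 : z.`_q != 1 by rewrite -order_eq1 order_constt -oxz.
have ox : #[x.`_q] = q := pelt_order_p Gxq pq (p_elt_constt _ _) nx1.
have oz : #[z.`_q] = q := pelt_order_p Gzq pq (p_elt_constt _ _) nz1.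
have Ax : <[x.`_q]>%G \in A by apply: atom_cycle; rewrite ?ox.
have Az : <[z.`_q]>%G \in A by apply: atom_cycle; rewrite ?oz.
have e : <[x.`_q]>%G = <[z.`_q]>%G by apply: unique_atom; rewrite //= -!orderE ox oz.
have : x.`_q \in <[z.`_q]>%G by rewrite -e cycle_id.
by apply: subsetP; rewrite /= cycle_subG cycle_constt.
Qed.

End CaseII.



Section Converse.
Variable gT : finGroupType.
Implicit Types H K L : {group gT}.
Variable G : {group gT}.
Hypothesis cycG : cyclic G.
Hypothesis sqf : squarefree #|G|.

Let n := #|G|.

Lemma sqfP q : prime q -> q %| n -> ~~ (q * q %| n).
Proof.
move=> pq qn; have qle : q < n.+1 by rewrite ltnS dvdn_leq // cardG_gt0.
by move/forallP: sqf => /(_ (Ordinal qle)) /implyP /(_ pq).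
Qed.

Definition sub_ord (d : nat) : {group gT} :=
  odflt 1%G [pick L : {group gT} | (L \subset G) && (#|L| == d)].

Lemma sub_ordP d : d %| n -> sub_ord d \subset G /\ #|sub_ord d| = d.
Proof.
move=> dn; rewrite /sub_ord; case: pickP => [L /andP[sLG /eqP] //|none].
have [a ea] := cyclicP cycG.
have dA : d %| #[a] by rewrite orderE -ea.
have d0 : 0 < d by apply: dvdn_gt0 dA; exact: order_gt0.
have q0 : 0 < #[a] %/ d by rewrite divn_gt0 // dvdn_leq.
have e : #[a] %/ (#[a] %/ d) = d by rewrite -{1}(divnK dA) mulKn.
have := none <[a ^+ (#[a] %/ d)]>%G.
by rewrite /= ea cycleX -orderE orderXdiv ?dvdn_div // e eqxx.
Qed.


Lemma cyc_cover_prime H K : H \subset G -> K \subset G -> covers H K -> prime #|K : H|.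
Proof.
move=> sHG sKG cHK; have /andP[pHK nb] := cHK.
have sHK := proper_sub pHK.
set m := #|K : H|.
have m1 : 1 < m.
  rewrite ltn_neqAle indexg_gt0 andbT eq_sym indexg_eq1.
  by move: pHK; rewrite properE => /andP[].
apply/negPn/negP => npm.
have pq : prime (pdiv m) := pdiv_prime m1.
have qm : pdiv m %| m := pdiv_dvd m.
have qlt : pdiv m < m.
  rewrite ltn_neqAle dvdn_leq ?andbT ?(ltnW m1) //.
  by apply/eqP=> e; move: pq; rewrite e (negbTE npm).
set q := pdiv m in pq qm qlt.
have eK : #|K| = (#|H| * m)%N by rewrite /m -(Lagrange sHK).
have dL : (#|H| * q)%N %| n.
  apply: dvdn_trans (cardSg sKG); rewrite eK dvdn_pmul2l //.
have [sLG cL] := sub_ordP dL.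
set L := sub_ord _ in sLG cL.
have sHL : H \subset L by rewrite -(cardSg_cyclic cycG sHG sLG) cL dvdn_mulr.
have sLK : L \subset K by rewrite -(cardSg_cyclic cycG sLG sKG) cL eK dvdn_pmul2l.
have H0 := cardG_gt0 H.
have pHL : H \proper L by rewrite properEcard sHL cL -{1}(muln1 #|H|) ltn_pmul2l // prime_gt1.
have pLK : L \proper K by rewrite properEcard sLK cL eK ltn_pmul2l.
by move/forallP: nb => /(_ L); rewrite pHL pLK.
Qed.


Definition Pr := [set p : 'I_n.+1 | prime p && (p %| n)].
Definition cval (d : nat) (p : nat) := if p %| d then d %/ p else (d * p)%N.
Definition phi (d : nat) (p : 'I_n.+1) : {group gT} := sub_ord (cval d p).

Lemma cval_dvd d p : d %| n -> prime p -> p %| n -> cval d p %| n.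
Proof.
move=> dn pp pn; rewrite /cval; case: ifP => pd.
  exact: dvdn_trans (dvdn_div pd) dn.
rewrite Gauss_dvd ?dn ?pn // coprime_sym prime_coprime //; by rewrite pd.
Qed.

Lemma cval_inj d p1 p2 : 0 < d -> prime p1 -> prime p2 -> cval d p1 = cval d p2 -> p1 = p2.
Proof.
move=> d0 pp1 pp2; rewrite /cval.
have key : forall a b, prime a -> prime b -> a %| d -> ~~ (b %| d) -> d %/ a = (d * b)%N -> False.
  move=> a b pa pb ad nbd e.
  have : (d * b * a = d * 1)%N by rewrite -e divnK // muln1.
  move/eqP; rewrite -mulnA eqn_pmul2l // muln_eq1 => /andP[/eqP b1 _].
  by move: pb; rewrite b1.
case: ifP => d1; case: ifP => d2.
- move=> e; have : (d %/ p1 * p1 = d %/ p2 * p2)%N by rewrite !divnK.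
  rewrite e; move/eqP; rewrite eqn_pmul2l; first by move/eqP.
  by rewrite divn_gt0 ?prime_gt0 // dvdn_leq.
- by move=> e; case: (key _ _ pp1 pp2 d1 (negbT d2) e).
- by move=> e; case: (key _ _ pp2 pp1 d2 (negbT d1) (esym e)).
by move/eqP; rewrite eqn_pmul2l // => /eqP.
Qed.


Lemma eq_sub_ord K d : K \subset G -> #|K| = d -> sub_ord d = K.
Proof.
move=> sKG cK; have dn : d %| n by rewrite -cK cardSg.
have [sLG cL] := sub_ordP dn.
apply: val_inj => /=; apply/eqP.
by rewrite (eq_subG_cyclic cycG sLG sKG) cL cK.
Qed.

Lemma deg_cyc H : H \subset G -> subgraph_degree G H = #|Pr|.
Proof.
move=> sHG; set d := #|H|.
have dn : d %| n := cardSg sHG.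
have d0 : 0 < d := cardG_gt0 H.
have img : [set K : {group gT} | (K \subset G) && subgraph_edge H K] = phi d @: Pr.
  apply/setP => K; rewrite inE; apply/idP/idP.
    case/andP=> sKG /orP[cHK | cKH].
      have sHK : H \subset K by case/andP: cHK => /proper_sub.
      have pq := cyc_cover_prime sHG sKG cHK.
      set q := #|K : H| in pq.
      have eK : #|K| = (d * q)%N by rewrite /q /d Lagrange.
      have qn : q %| n by apply: dvdn_trans (cardSg sKG); rewrite eK dvdn_mull.
      have nqd : ~~ (q %| d).
        apply/negP => qd; have := sqfP pq qn; rewrite (dvdn_trans _ (cardSg sKG)) //.
        by rewrite eK mulnC dvdn_pmul2l ?prime_gt0.
      have qlt : q < n.+1 by rewrite ltnS dvdn_leq // cardG_gt0.
      apply/imsetP; exists (Ordinal qlt); first by rewrite inE /= pq qn.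
      by rewrite /phi /cval /= (negbTE nqd) (eq_sub_ord sKG).
    have sKH : K \subset H by case/andP: cKH => /proper_sub.
    have pq := cyc_cover_prime sKG sHG cKH.
    set q := #|H : K| in pq.
    have eH : d = (#|K| * q)%N by rewrite /q /d Lagrange.
    have qd : q %| d by rewrite eH dvdn_mull.
    have qn : q %| n := dvdn_trans qd dn.
    have qlt : q < n.+1 by rewrite ltnS dvdn_leq // cardG_gt0.
    apply/imsetP; exists (Ordinal qlt); first by rewrite inE /= pq qn.
    rewrite /phi /cval /= qd (eq_sub_ord sKG) // eH mulnK // prime_gt0 //.
  case/imsetP => p; rewrite inE => /andP[pp pn] ->.
  have [sLG cL] := sub_ordP (cval_dvd dn pp pn).
  rewrite /phi sLG /subgraph_edge /=.
  set L := sub_ord _ in sLG cL *.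
  move: cL; rewrite /cval; case: ifP => pd cL.
    apply/orP; right; apply: prime_index_covers.
      by rewrite -(cardSg_cyclic cycG sLG sHG) cL dvdn_div.
    rewrite -divgS; last by rewrite -(cardSg_cyclic cycG sLG sHG) cL dvdn_div.
    by rewrite cL -/d divnA ?dvdnn // mulKn // divnn d0 muln1 //.
  apply/orP; left; apply: prime_index_covers.
    by rewrite -(cardSg_cyclic cycG sHG sLG) cL dvdn_mulr.
  rewrite -divgS; last by rewrite -(cardSg_cyclic cycG sHG sLG) cL dvdn_mulr.
  by rewrite cL -/d mulKn.
rewrite /subgraph_degree img card_in_imset //.
move=> p1 p2; rewrite !inE => /andP[pp1 pn1] /andP[pp2 pn2] e.
apply: val_inj; apply: (cval_inj d0 pp1 pp2).
have [_ c1] := sub_ordP (cval_dvd dn pp1 pn1).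
have [_ c2] := sub_ordP (cval_dvd dn pp2 pn2).
by rewrite -c1 -c2; have := congr1 (fun L : {group gT} => #|L|) e.
Qed.

Theorem converse : subgraph_regular G.
Proof.
move=> H K; rewrite !inE => sHG sKG.
by rewrite (deg_cyc sHG) (deg_cyc sKG).
Qed.


End Converse.


Unset Implicit Arguments.

Theorem mainTheorem1 (gT : finGroupType) (G : {group gT}) :
  subgraph_regular G <-> (cyclic G /\ squarefree #|G|).
Proof.
split; last by case=> cyc sq; exact: converse.
move=> reg.
case: (boolP [exists x in G, [exists q : 'I_#|G|.+1, prime q && (q * q %| #[x])%N]]).
  case/existsP => x /andP[Gx /existsP[q /andP[pq qqx]]].
  set xq := (x.`_q)%g.
  have Gxq : xq \in G.
    by apply: (subsetP _ _ (cycle_constt q x)); rewrite cycle_subG.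
  have qxq : q.-elt xq by exact: p_elt_constt.
  pose Pz := [pred z : gT | (z \in G) && q.-elt z].
  have P0 : Pz xq by rewrite /Pz /= Gxq qxq.
  case: (@arg_maxnP gT xq Pz (fun z => #[z]%g) P0) => y /andP[Gy qy] maxy.
  have oxq : #[xq]%g = (q ^ logn q #[x])%N by rewrite order_constt p_part.
  have lg : (2 <= logn q #[x]%g)%N by rewrite -pfactor_dvdn // expnS expn1.
  have ky : (q * q %| #[y]%g)%N.
    have [j ej] := p_natP qy.
    have : (q ^ 2 <= q ^ j)%N.
      apply: leq_trans (_ : q ^ logn q #[x] <= _)%N.
        by rewrite leq_exp2l ?(prime_gt1 pq).
      by rewrite -oxq -ej; apply: maxy; rewrite /= Gxq qxq.
    rewrite leq_exp2l ?(prime_gt1 pq) // => j2.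
    by rewrite ej -(expn1 q) -expnS dvdn_exp2l.
  have := degree_lt pq qy ky Gy (fun z Gz qz => maxy z (introT andP (conj Gz qz))).
  rewrite (reg <[y]>%G <[y ^+ q]>%G) ?ltnn // inE cycle_subG ?groupX //.
move=> none.
have nop2 : forall x, x \in G -> forall q, prime q -> ~~ (q * q %| #[x]%g)%N.
  move=> x Gx q pq; apply/negP => qqx.
  have qle : (q < #|G|.+1)%N.
    rewrite ltnS (leq_trans _ (dvdn_leq (cardG_gt0 G) (order_dvdG Gx))) //.
    apply: leq_trans (dvdn_leq (order_gt0 x) qqx).
    by rewrite leq_pmulr ?prime_gt0.
  move/negP: none; apply; apply/existsP; exists x; rewrite Gx /=.
  by apply/existsP; exists (Ordinal qle); rewrite /= pq qqx.
split; [exact: caseII_cyc nop2 reg | exact: caseII_sqf nop2 reg].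
Qed.
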